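(* Let $(\Omega,S)$ be a scheme such that for every $\alpha\in\Omega$ the $\alpha$-extension $(\Omega,S_\alpha)$ is semiregular on $\Omega\setminus\{\alpha\}$ and its fibers are exactly the sets $\alpha s$, $s\in S$. Then $(\Omega,S)$ is a regular scheme or a Frobenius scheme.
   Context: A coherent configuration is a pair $(\Omega,S)$ with $\Omega$ finite and $S$ a partition of $\Omega\times\Omega$ such that the diagonal $1_\Omega$ is a union of elements of $S$, $S$ is closed under transposition, and for $r,s,t\in S$ the number $c_{rs}^t=|\{\beta:(\alpha,\beta)\in r,(\beta,\gamma)\in s\}|$ does not depend on $(\alpha,\gamma)\in t$. A scheme is one with $1_\Omega\in S$; $\alpha s=\{\beta:(\alpha,\beta)\in s\}$. A coherent configuration is semiregular if $|\alpha s|\le 1$ for all $\alpha,s$; a semiregular scheme is called regular. Fibers of $(\Omega,T)$ are sets $\Delta$ with $1_\Delta\in T$. The $\alpha$-extension $(\Omega,S_\alpha)$ is the coarsest coherent configuration on $\Omega$ such that $\{(\alpha,\alpha)\}$ and every $s\in S$ are unions of its basis relations; it is semiregular on $\Omega\setminus\{\alpha\}$ if $|\beta s|\le1$ for all $\beta\ne\alpha$ and $s\in S_\alpha$ with $s\subseteq(\Omega\setminus\{\alpha\})^2$. A Frobenius group is a non-regular transitive permutation group in which only the identity fixes two distinct points; a Frobenius scheme is the scheme (set of orbits on $\Omega\times\Omega$) of a Frobenius group. *)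

(* Defs.v *)
From mathcomp Require Import all_boot all_order all_fingroup.
Set Implicit Arguments. Unset Strict Implicit. Unset Printing Implicit Defensive.

Section CC.
Variable T : finType.

Definition diag (D : {set T}) : {set T * T} :=
  [set p | (p.1 == p.2) && (p.1 \in D)].

Definition transp (s : {set T * T}) : {set T * T} :=
  [set p | (p.2, p.1) \in s].

Definition nbhd (a : T) (s : {set T * T}) : {set T} := [set b | (a, b) \in s].

Definition is_union (S : {set {set T * T}}) (r : {set T * T}) : Prop :=
  exists2 U : {set {set T * T}}, U \subset S & cover U = r.

Definition coherent (S : {set {set T * T}}) : Prop :=
  [/\ partition S [set: T * T],
      is_union S (diag [set: T]),
      (forall s, s \in S -> transp s \in S) &
      (forall r s t, r \in S -> s \in S -> t \in S ->
         forall a c a' c', (a, c) \in t -> (a', c') \in t ->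
           #|[set b | ((a, b) \in r) && ((b, c) \in s)]| =
           #|[set b | ((a', b) \in r) && ((b, c') \in s)]|)].

Definition scheme (S : {set {set T * T}}) : Prop :=
  coherent S /\ diag [set: T] \in S.

Definition semiregular (S : {set {set T * T}}) : Prop :=
  forall a s, s \in S -> #|nbhd a s| <= 1.

Definition regular_scheme (S : {set {set T * T}}) : Prop :=
  scheme S /\ semiregular S.

Definition refines (R S : {set {set T * T}}) : Prop :=
  forall s, s \in S -> is_union R s.

Definition alpha_extension (S : {set {set T * T}}) (a : T)
    (R : {set {set T * T}}) : Prop :=
  [/\ coherent R, refines R S, is_union R [set (a, a)] &
      forall R', coherent R' -> refines R' S -> is_union R' [set (a, a)] ->
        refines R' R].

Definition semiregular_off (R : {set {set T * T}}) (a : T) : Prop :=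
  forall b s, b != a -> s \in R ->
    s \subset [set p | (p.1 != a) && (p.2 != a)] -> #|nbhd b s| <= 1.

Definition fibers (R : {set {set T * T}}) : {set {set T}} :=
  [set D : {set T} | diag D \in R].

Definition frobenius_group (G : {group {perm T}}) : Prop :=
  [/\ [transitive G, on [set: T] | 'P],
      (exists2 g, g \in G & g != 1%g /\ exists x, g x = x) &
      (forall g x y, g \in G -> x != y -> g x = x -> g y = y -> g = 1%g)].

Definition orbitals (G : {group {perm T}}) : {set {set T * T}} :=
  [set [set ((g : {perm T}) p.1, g p.2) | g in G] | p : T * T].

Definition frobenius_scheme (S : {set {set T * T}}) : Prop :=
  exists G : {group {perm T}}, frobenius_group G /\ S = orbitals G.

End CC.

(* Main.v *)
Require Import Defs.
From mathcomp Require Import all_boot all_order all_fingroup.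
Set Implicit Arguments. Unset Strict Implicit. Unset Printing Implicit Defensive.

Section Part.
Variable T : finType.
Implicit Types (P : {set {set T * T}}) (X : {set T * T}).

Lemma closed_union P X : partition P [set: T * T] ->
  (forall p q, q \in pblock P p -> p \in X -> q \in X) -> is_union P X.
Proof.
case/and3P => /eqP cP tP _ cl.
exists [set B in P | B \subset X]; first by apply/subsetP => B; rewrite inE => /andP[].
apply/setP => p; apply/bigcupP/idP.
  by case=> B; rewrite inE => /andP[_ /subsetP]; apply.
move=> pX; exists (pblock P p); last by rewrite mem_pblock cP inE.
rewrite inE pblock_mem ?cP ?inE //=; apply/subsetP => q qp; exact: cl qp pX.
Qed.

Lemma union_closed P X : partition P [set: T * T] -> is_union P X ->
  forall p q, q \in pblock P p -> p \in X -> q \in X.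
Proof.
case/and3P => /eqP cP tP _ [U sU <-] p q qp /bigcupP [B BU pB].
apply/bigcupP; exists B => //.
by rewrite -(def_pblock tP (subsetP sU _ BU) pB).
Qed.

Lemma pblock_sym P p q : partition P [set: T * T] ->
  q \in pblock P p -> p \in pblock P q.
Proof.
case/and3P => /eqP cP tP _ qp.
by rewrite (same_pblock tP qp) mem_pblock cP inE.
Qed.

Lemma pblock_self P p : partition P [set: T * T] -> p \in pblock P p.
Proof. by case/and3P => /eqP cP _ _; rewrite mem_pblock cP inE. Qed.


Lemma card_sum (U : finType) (B : pred U) : #|[set z | B z]| = \sum_z (B z : nat).
Proof.
rewrite -sum1_card big_mkcond /=; apply: eq_bigr => z _; rewrite inE.
by case: (B z).
Qed.

Lemma sum_blocks P X p : partition P [set: T * T] -> is_union P X ->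
  \sum_(r in P | r \subset X) (p \in r : nat) = (p \in X : nat).
Proof.
move=> hP hX; have [/eqP cP tP _] := and3P hP.
have pbP : pblock P p \in P by rewrite pblock_mem ?cP ?inE.
case pX: (p \in X).
  have sub : pblock P p \subset X.
    by apply/subsetP => q qp; apply: (union_closed hP hX) qp pX.
  rewrite (bigD1 (pblock P p)) /=; last by rewrite pbP sub.
  rewrite pblock_self // big1 // => r /andP[/andP[rP _] rne].
  apply/eqP; rewrite eqb0; apply/negP => pr.
  by move: rne; rewrite (def_pblock tP rP pr) eqxx.
rewrite big1 // => r /andP[rP /subsetP rX]; apply/eqP; rewrite eqb0.
by apply/negP => /rX; rewrite pX.
Qed.

Lemma count_decomp P X Y a c : partition P [set: T * T] ->
  is_union P X -> is_union P Y ->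
  #|[set z | ((a, z) \in X) && ((z, c) \in Y)]| =
  \sum_(r in P | r \subset X) \sum_(s in P | s \subset Y)
     #|[set z | ((a, z) \in r) && ((z, c) \in s)]|.
Proof.
move=> hP hX hY; rewrite card_sum.
under eq_bigr => z _ do
  rewrite -mulnb -(sum_blocks (a, z) hP hX) -(sum_blocks (z, c) hP hY) big_distrl /=.
rewrite exchange_big /=; apply: eq_bigr => r _.
under eq_bigr => z _ do rewrite big_distrr /=.
rewrite exchange_big /=; apply: eq_bigr => s _.
rewrite card_sum; apply: eq_bigr => z _.
by case: ((a, z) \in r); case: ((z, c) \in s).
Qed.

Lemma UL P X Y a c a' c' : coherent P ->
  is_union P X -> is_union P Y -> (a', c') \in pblock P (a, c) ->
  #|[set z | ((a, z) \in X) && ((z, c) \in Y)]| =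
  #|[set z | ((a', z) \in X) && ((z, c') \in Y)]|.
Proof.
case=> hP _ _ hc hX hY h.
have [/eqP cP tP _] := and3P hP.
rewrite !(count_decomp _ _ hP hX hY); apply: eq_bigr => r /andP[rP _].
apply: eq_bigr => s /andP[sP _]; apply: (hc r s (pblock P (a, c))) => //.
  by rewrite pblock_mem ?cP ?inE.
exact: pblock_self.
Qed.

End Part.

Section WLdef.
Variable T : finType.
Implicit Types (E F : rel (T * T)) (p q x y : T * T).

Definition tr (p : T * T) := (p.2, p.1).
Definition E0 (S : {set {set T * T}}) (b : T) : rel (T * T) :=
  fun p q => (pblock S p == pblock S q) && ((p == (b, b)) == (q == (b, b))).
Definition cnt E p x y := #|[set z | E x (p.1, z) && E y (z, p.2)]|.
Definition step E : rel (T * T) := fun p q =>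
  [&& E p q, E (tr p) (tr q) & [forall x, forall y, cnt E p x y == cnt E q x y]].
Definition WL S b n := iter n step (E0 S b).

Definition equivE E := [/\ forall p, E p p, forall p q, E p q -> E q p &
  forall p q r, E p q -> E q r -> E p r].

Lemma E0_equiv S b : equivE (E0 S b).
Proof.
split.
- by move=> p; rewrite /E0 !eqxx.
- by move=> p q; rewrite /E0 => /andP[/eqP -> /eqP ->]; rewrite !eqxx.
- by move=> p q r; rewrite /E0 => /andP[/eqP -> /eqP ->] /andP[/eqP -> /eqP ->]; rewrite !eqxx.
Qed.

Lemma step_equiv E : equivE E -> equivE (step E).
Proof.
case=> rf sy trn; split.
- by move=> p; rewrite /step !rf /=; apply/forallP => x; apply/forallP => y.
- move=> p q /and3P[h1 h2 /forallP h3]; rewrite /step (sy _ _ h1) (sy _ _ h2) /=.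
  by apply/forallP => x; apply/forallP => y; move/forallP: (h3 x) => /(_ y) /eqP ->.
- move=> p q r /and3P[h1 h2 /forallP h3] /and3P[k1 k2 /forallP k3].
  rewrite /step (trn _ _ _ h1 k1) (trn _ _ _ h2 k2) /=.
  apply/forallP => x; apply/forallP => y.
  move/forallP: (h3 x) => /(_ y) /eqP ->.
  by move/forallP: (k3 x) => /(_ y) /eqP ->.
Qed.

Lemma WL_equiv S b n : equivE (WL S b n).
Proof. elim: n => [|n IH]; [exact: E0_equiv | exact: step_equiv]. Qed.

Lemma step_sub E p q : step E p q -> E p q.
Proof. by case/andP. Qed.

Lemma WL_sub0 S b n p q : WL S b n p q -> E0 S b p q.
Proof.
elim: n p q => [//|n IH] p q /=; by move/step_sub/IH.
Qed.

Lemma WL_mono S b m n p q : m <= n -> WL S b n p q -> WL S b m p q.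
Proof.
move=> /subnKC <-; elim: (n - m) => [|k IH]; first by rewrite addn0.
by rewrite addnS /= => /step_sub /IH.
Qed.

Definition stableb S b n :=
  [forall p, forall q, step (WL S b n) p q == WL S b n p q].
Definition msr S b n := #|[set pq : (T * T) * (T * T) | WL S b n pq.1 pq.2]|.

Lemma msr_lt S b n : ~~ stableb S b n -> msr S b n.+1 < msr S b n.
Proof.
move=> ns; apply: proper_card; rewrite properEneq; apply/andP; split.
  move: ns; apply: contra => /eqP eqs.
  apply/forallP => p; apply/forallP => q.
  move/setP: eqs => /(_ (p, q)); rewrite !inE /= => ->.
  by [].
by apply/subsetP => pq; rewrite !inE /= => /step_sub.
Qed.

Lemma stab_aux S b n :
  (exists2 i, i <= n & stableb S b i) \/ msr S b n + n <= msr S b 0.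
Proof.
elim: n => [|n [[i lin si]|IH]]; first by right; rewrite addn0.
  by left; exists i => //; apply: leq_trans lin _.
case: (boolP (stableb S b n)) => sn; first by left; exists n.
right; have := msr_lt sn; rewrite addnS => lt.
by apply: leq_trans IH; rewrite -addSn leq_add2r.
Qed.

Lemma WL_stab S b : exists n, stableb S b n.
Proof.
case: (stab_aux S b (msr S b 0).+1) => [[i _ si]|]; first by exists i.
by rewrite addnS ltnNge leq_addl.
Qed.


Lemma min_WL (S R' : {set {set T * T}}) b m p q :
  partition S [set: T * T] ->
  coherent R' -> refines R' S -> is_union R' [set (b, b)] ->
  q \in pblock R' p -> WL S b m p q.
Proof.
move=> hS cR rS ub; have [hP _ htr _] := cR.
have [/eqP cP tP _] := and3P hP.
have [/eqP cS tS _] := and3P hS.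
elim: m p q => [|m IH] p q qp /=.
  apply/andP; split.
    have pS : pblock S p \in S by rewrite pblock_mem ?cS ?inE.
    have := union_closed hP (rS _ pS) qp (pblock_self p hS) => qS.
    by rewrite eq_pblock ?cS ?inE.
  have cl := union_closed hP ub.
  have pq := pblock_sym hP qp.
  apply/eqP; apply/idP/idP => /eqP h.
    by move: (cl _ _ qp); rewrite h inE eqxx => /(_ isT); rewrite inE.
  by move: (cl _ _ pq); rewrite h inE eqxx => /(_ isT); rewrite inE.
apply/and3P; split; first exact: IH.
  apply: IH; have tpP : transp (pblock R' p) \in R'.
    by apply: htr; rewrite pblock_mem ?cP ?inE.
  have tpp : tr p \in transp (pblock R' p).
    by rewrite inE /= -surjective_pairing pblock_self.
  by rewrite (def_pblock tP tpP tpp) inE /= -surjective_pairing.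
apply/forallP => x; apply/forallP => y; apply/eqP.
have clX : forall w, is_union R' [set r | WL S b m w r].
  move=> w; apply: closed_union => // p' q' qp'; rewrite !inE => wp.
  by have [_ _ trn] := WL_equiv S b m; apply: trn wp (IH _ _ qp').
move: qp; case: p => a c; case: q => a' c' qp.
rewrite /cnt /=.
have h := UL cR (clX x) (clX y) qp.
transitivity #|[set z | ((a, z) \in [set r | WL S b m x r]) &&
   ((z, c) \in [set r | WL S b m y r])]|.
  by apply: eq_card => z; rewrite !inE.
by rewrite h; apply: eq_card => z; rewrite !inE.
Qed.

End WLdef.

Section Stable.
Variable T : finType.
Variable S : {set {set T * T}}.
Hypothesis hS : scheme S.
Variable b : T.
Variable n : nat.
Hypothesis hn : stableb S b n.

Local Notation E := (WL S b n).

Lemma Eeq : equivE E.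
Proof. exact: WL_equiv. Qed.
Lemma Erf p : E p p. Proof. by case: Eeq. Qed.
Lemma Esy p q : E p q -> E q p. Proof. by case: Eeq => _ h _; apply: h. Qed.
Lemma Etr p q r : E p q -> E q r -> E p r. Proof. by case: Eeq => _ _ h; apply: h. Qed.

Lemma Estep p q : step E p q = E p q.
Proof. by move/forallP: hn => /(_ p) /forallP /(_ q) /eqP. Qed.

Lemma E_tr p q : E p q -> E (tr p) (tr q).
Proof. by rewrite -Estep => /and3P[]. Qed.

Lemma E_cnt p q x y : E p q -> cnt E p x y = cnt E q x y.
Proof. by rewrite -Estep => /and3P[_ _ /forallP /(_ x) /forallP /(_ y) /eqP]. Qed.

Lemma E_0 p q : E p q -> E0 S b p q.
Proof. exact: WL_sub0. Qed.

Lemma S_part : partition S [set: T * T]. Proof. by case: hS => [[]]. Qed.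
Lemma diag_S : diag [set: T] \in S. Proof. by case: hS. Qed.

Lemma in_diag_pblock p : (p \in diag [set: T]) = (pblock S p == diag [set: T]).
Proof.
have [/eqP cS tS _] := and3P S_part.
apply/idP/eqP => [pd|<-]; first exact: def_pblock tS diag_S pd.
exact: (pblock_self p S_part).
Qed.

Lemma Ediag p q : E p q -> (p.1 == p.2) = (q.1 == q.2).
Proof.
move/E_0 => /andP[/eqP h _].
have := in_diag_pblock p; have := in_diag_pblock q; rewrite !inE !andbT h.
by move=> -> ->.
Qed.

Lemma Ebb q : E (b, b) q -> q = (b, b).
Proof.
move=> h; have /andP[_ /eqP e] := E_0 h.
by apply/eqP; rewrite -e eqxx.
Qed.

Lemma Eleft p q : E p q -> E (p.1, p.1) (q.1, q.1).
Proof.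
move=> pq; have eqc := E_cnt (p.1, p.1) p pq; rewrite /cnt in eqc.
have /card_gt0P [z' ] : 0 < #|[set z | E (p.1, p.1) (q.1, z) && E p (z, q.2)]|.
  by rewrite -eqc; apply/card_gt0P; exists p.1; rewrite inE Erf -surjective_pairing Erf.
rewrite inE => /andP[h _]; have := Ediag h; rewrite eqxx /= => /esym/eqP e.
by move: h; rewrite -e.
Qed.

Lemma Eright p q : E p q -> E (p.2, p.2) (q.2, q.2).
Proof.
move=> pq; have eqc := E_cnt p (p.2, p.2) pq; rewrite /cnt in eqc.
have /card_gt0P [z'] : 0 < #|[set z | E p (q.1, z) && E (p.2, p.2) (z, q.2)]|.
  by rewrite -eqc; apply/card_gt0P; exists p.2; rewrite inE Erf -surjective_pairing Erf.
rewrite inE => /andP[_ h]; have := Ediag h; rewrite eqxx /= => /esym/eqP e.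
by move: h; rewrite e.
Qed.

Lemma Eb1 p q : E p q -> (p.1 == b) = (q.1 == b).
Proof.
have key : forall p q, E p q -> p.1 == b -> q.1 == b.
  move=> p0 q0 /Eleft h /eqP e; move: h; rewrite e => /Ebb [e1 _]; by rewrite e1.
by move=> pq; apply/idP/idP; apply: key => //; apply: Esy.
Qed.

Lemma Eb2 p q : E p q -> (p.2 == b) = (q.2 == b).
Proof.
have key : forall p q, E p q -> p.2 == b -> q.2 == b.
  move=> p0 q0 /Eright h /eqP e; move: h; rewrite e => /Ebb [e1 _]; by rewrite e1.
by move=> pq; apply/idP/idP; apply: key => //; apply: Esy.
Qed.


Definition RR := equivalence_partition E [set: T * T].

Lemma E_equiv_rel : {in [set: T * T] & &, equivalence_rel E}.
Proof.
move=> x y z _ _ _; split; first exact: Erf.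
move=> xy; apply/idP/idP => h; first exact: Etr (Esy xy) h.
exact: Etr xy h.
Qed.

Lemma RR_part : partition RR [set: T * T].
Proof. exact: equivalence_partitionP E_equiv_rel. Qed.

Lemma pbRR p q : (q \in pblock RR p) = E p q.
Proof. by rewrite /RR (pblock_equivalence_partition E_equiv_rel) ?inE. Qed.

Lemma RR_closed (X : {set T * T}) : (forall p q, E p q -> p \in X -> q \in X) -> is_union RR X.
Proof.
move=> h; apply: closed_union RR_part _ => p q; rewrite pbRR; exact: h.
Qed.

Lemma inRR s : s \in RR -> exists x, s = [set y in [set: T * T] | E x y].
Proof. by case/imsetP => x _ ->; exists x. Qed.

Lemma RR_alpha : alpha_extension S b RR.
Proof.
have [/eqP cS tS _] := and3P S_part.
split.
- split; first exact: RR_part.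
  + apply: RR_closed => p q pq; rewrite !inE !andbT; by rewrite (Ediag pq).
  + move=> s /inRR [x ->].
    have -> : transp [set y in [set: T * T] | E x y] =
              [set y in [set: T * T] | E (tr x) y].
      apply/setP => y; rewrite !inE /=; apply/idP/idP => h.
        by have := E_tr h; rewrite /tr /= -surjective_pairing.
      by have := E_tr h; rewrite /tr /= -surjective_pairing.
    exact: imset_f.
  + move=> r s t /inRR [x ->] /inRR [y ->] /inRR [w ->] a c a' c'.
    rewrite !inE => h1 h2.
    have := E_cnt x y (Etr (Esy h1) h2); rewrite /cnt /= => e.
    transitivity #|[set z | E x (a, z) && E y (z, c)]|.
      by apply: eq_card => z; rewrite !inE.
    by rewrite e; apply: eq_card => z; rewrite !inE.
- move=> s sS; apply: RR_closed => p q pq ps.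
  have /andP[/eqP e _] := E_0 pq.
  have := pblock_self q S_part; rewrite -e.
  by rewrite (def_pblock tS sS ps).
- apply: RR_closed => p q pq; rewrite !inE => /eqP e.
  by move: pq; rewrite e => /Ebb ->.
- move=> R' cR' rS ub s /inRR [x ->].
  have [hP _ _ _] := cR'.
  apply: closed_union => // p q qp; rewrite !inE => xp.
  apply: Etr xp _; exact: min_WL S_part cR' rS ub qp.
Qed.

End Stable.

Definition Aut (T : finType) (S : {set {set T * T}}) : {set {perm T}} :=
  [set g : {perm T} | [forall p, (g p.1, g p.2) \in pblock S p]].

Lemma WL_inv (T : finType) (S : {set {set T * T}}) b (g : {perm T}) m :
  partition S [set: T * T] -> g \in Aut S -> g b = b ->
  forall p, WL S b m p (g p.1, g p.2).
Proof.
move=> hS; rewrite inE => /forallP gA gb.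
have [/eqP cS tS _] := and3P hS.
elim: m => [|m IH] p /=.
  rewrite /E0; apply/andP; split.
    rewrite eq_pblock //; last by rewrite cS inE.
    idtac.
  apply/eqP; apply/idP/idP => /eqP.
    by case: p => p1 p2 [] -> ->; rewrite gb eqxx.
  case: p => p1 p2 /= [e1 e2]; apply/eqP; congr pair; apply: (@perm_inj _ g).
    by rewrite e1 gb.
  by rewrite e2 gb.
apply/and3P; split; [exact: IH | exact: (IH (tr p)) |].
apply/forallP => x; apply/forallP => y; apply/eqP; rewrite /cnt /=.
have [_ _ trn] := WL_equiv S b m.
have [_ sy _] := WL_equiv S b m.
rewrite -(card_imset _ (@perm_inj _ g)); apply: eq_card => z.
rewrite -{1}(permKV g z) mem_imset ?inE; last exact: perm_inj.
apply/idP/idP => /andP[h1 h2]; apply/andP; split.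
- by apply: trn h1 _; rewrite -{2}(permKV g z); apply: (IH (p.1, g^-1 z)%g).
- by apply: trn h2 _; rewrite -{2}(permKV g z); apply: (IH (g^-1 z, p.2)%g).
- apply: trn h1 _; apply: sy; rewrite -{2}(permKV g z); exact: (IH (p.1, g^-1 z)%g).
- apply: trn h2 _; apply: sy; rewrite -{2}(permKV g z); exact: (IH (g^-1 z, p.2)%g).
Qed.

Section Main.
Variable T : finType.
Variable S : {set {set T * T}}.
Hypothesis hS : scheme S.
Variable b : T.
Variable n : nat.
Hypothesis hn : stableb S b n.
Hypothesis H1 : semiregular_off (RR S b n) b.
Hypothesis H2 : fibers (RR S b n) = [set nbhd b s | s in S].

Local Notation E := (WL S b n).

Lemma Ucl c w w' : c != b -> E (c, w) (c, w') -> w = w'.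
Proof.
move=> cb h.
case: (boolP (w == b)) => [/eqP wb|wb].
  by have := Eb2 hS hn h; rewrite wb eqxx /= => /esym/eqP.
set s := [set y in [set: T * T] | E (c, w) y].
have sR : s \in RR S b n by apply: imset_f.
have sub : s \subset [set p | (p.1 != b) && (p.2 != b)].
  apply/subsetP => y; rewrite !inE => hy.
  by rewrite -(Eb1 hS hn hy) -(Eb2 hS hn hy) /= cb wb.
have := H1 cb sR sub => /card_le1_eqP.
have wi : w \in nbhd c s by rewrite !inE Erf.
have w'i : w' \in nbhd c s by rewrite !inE.
by move/(_ w' w w'i wi).
Qed.

Lemma Fib x y u : u \in S -> (b, x) \in u -> (b, y) \in u -> E (x, x) (y, y).
Proof.
move=> uS bx byy.
have [/eqP cS tS _] := and3P (S_part hS).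
set D := [set z | E (x, x) (z, z)].
have dD : diag D = [set q in [set: T * T] | E (x, x) q].
  apply/setP => q; rewrite !inE; apply/andP/idP => [[/eqP e h]|h].
    by case: q e h => q1 q2 /= <-.
  have := Ediag hS h; rewrite eqxx => /esym/eqP e; split; first by rewrite e.
  by case: q e h => q1 q2 /= <-.
have : D \in fibers (RR S b n) by rewrite inE dD; apply: imset_f.
rewrite H2 => /imsetP [s sS eD].
have xs : (b, x) \in s.
  have : x \in D by rewrite inE Erf.
  by rewrite eD inE.
have su : s = u by rewrite -(def_pblock tS sS xs) (def_pblock tS uS bx).
suff : y \in D by rewrite inE.
by rewrite eD inE su.
Qed.


Lemma one_Aut : (1 : {perm T})%g \in Aut S.
Proof.
rewrite inE; apply/forallP => p; rewrite !perm1 -surjective_pairing.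
exact: pblock_self (S_part hS).
Qed.

Lemma P2 g x : g \in Aut S -> g b = b -> x != b -> g x = x -> g = 1%g.
Proof.
move=> gA gb xb gx; apply/permP => y; rewrite perm1.
have := WL_inv n (S_part hS) gA gb (x, y); rewrite /= gx => h.
by symmetry; apply: Ucl xb h.
Qed.

Lemma P1 u x y : u \in S -> (b, x) \in u -> (b, y) \in u ->
  exists2 g, g \in Aut S & (g b = b /\ g x = y).
Proof.
move=> uS bx byy.
have [/eqP cS tS _] := and3P (S_part hS).
have diagu : forall z, (b, z) \in u -> z = b -> u = diag [set: T].
  move=> z bz zb; rewrite -(def_pblock tS uS bz) (def_pblock tS (diag_S hS)) //.
  by rewrite !inE zb eqxx.
case: (boolP (x == b)) => [/eqP xb | xb].
  have ud := diagu x bx xb.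
  move: byy; rewrite ud !inE andbT /= => /eqP <-.
  by exists 1%g; [exact: one_Aut | rewrite !perm1 xb].
have yb : y != b.
  apply/negP => /eqP yb; move: bx; rewrite (diagu y byy yb) !inE andbT /=.
  by rewrite eq_sym (negbTE xb).
have Exy := Fib uS bx byy.
have ex : forall z, exists w, E (x, z) (y, w).
  move=> z; have := E_cnt hn (x, z) (z, x) Exy; rewrite /cnt /= => e.
  have /card_gt0P [w] : 0 < #|[set w | E (x, z) (y, w) && E (z, x) (w, y)]|.
    by rewrite -e; apply/card_gt0P; exists z; rewrite inE !Erf.
  by rewrite inE => /andP[h _]; exists w.
pose hf z := odflt z [pick w | E (x, z) (y, w)].
have hspec : forall z, E (x, z) (y, hf z).
  move=> z; rewrite /hf; case: pickP => [w //| none].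
  by case: (ex z) => w; rewrite none.
have hinj : injective hf.
  move=> z z' e; have h1 := hspec z; have h2 := hspec z'; rewrite e in h1.
  apply: (Ucl xb); exact: Etr h1 (Esy h2).
have gE : forall z, perm hinj z = hf z := permE hinj.
have pres : forall z1 z2, E (z1, z2) (hf z1, hf z2).
  move=> z1 z2; have := E_cnt hn (x, z1) (z1, z2) (hspec z2); rewrite /cnt /= => e.
  have /card_gt0P [w] : 0 < #|[set w | E (x, z1) (y, w) && E (z1, z2) (w, hf z2)]|.
    by rewrite -e; apply/card_gt0P; exists z1; rewrite inE !Erf.
  rewrite inE => /andP[h1 h2].
  have -> : hf z1 = w by apply: (Ucl yb); exact: Etr (Esy (hspec z1)) h1.
  by [].
exists (perm hinj); last split.
- rewrite inE; apply/forallP => p; rewrite !gE.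
  have := pres p.1 p.2; rewrite -surjective_pairing => /E_0 /andP[/eqP e _].
  by rewrite e; exact: pblock_self (S_part hS).
- rewrite gE; have := Eb2 hS hn (hspec b); rewrite /= eqxx => /esym/eqP //.
- rewrite gE; symmetry; apply: (Ucl yb); exact: Etr (Esy Exy) (hspec x).
Qed.

End Main.

Section Final.
Variable T : finType.
Variable S : {set {set T * T}}.
Hypothesis hS : scheme S.
Hypothesis hyp : forall (a : T) (R : {set {set T * T}}), alpha_extension S a R ->
     semiregular_off R a /\ fibers R = [set nbhd a s | s in S].

Lemma P1all b u x y : u \in S -> (b, x) \in u -> (b, y) \in u ->
  exists2 g, g \in Aut S & (g b = b /\ g x = y).
Proof.
have [n hn] := WL_stab S b; have [H1 H2] := hyp (RR_alpha hS hn).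
exact: (@P1 _ _ hS b n hn H1 H2 u x y).
Qed.

Lemma P2all g b x : g \in Aut S -> g b = b -> x != b -> g x = x -> g = 1%g.
Proof.
have [n hn] := WL_stab S b; have [H1 H2] := hyp (RR_alpha hS hn).
exact: (@P2 _ _ hS b n hn H1 g x).
Qed.

Lemma Aut_group : group_set (Aut S).
Proof.
apply/group_setP; split; first exact: one_Aut hS.
have [/eqP cS tS _] := and3P (S_part hS).
move=> g h; rewrite !inE => /forallP gA /forallP hA; apply/forallP => p.
rewrite !permM.
have e : pblock S (g p.1, g p.2) = pblock S p by apply: (same_pblock tS); exact: (gA p).
by rewrite -e; exact: (hA (g p.1, g p.2)).
Qed.

Definition AutG := Group Aut_group.

Lemma Aut_pres g p : g \in Aut S -> pblock S (g p.1, g p.2) = pblock S p.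
Proof.
have [/eqP cS tS _] := and3P (S_part hS).
rewrite inE => /forallP gA; apply: (same_pblock tS); exact: (gA p).
Qed.

Lemma Aut_mem g s p : g \in Aut S -> s \in S -> p \in s -> (g p.1, g p.2) \in s.
Proof.
have [/eqP cS tS _] := and3P (S_part hS).
move=> gA sS ps; rewrite -(def_pblock tS sS ps) -(Aut_pres p gA).
exact: pblock_self (S_part hS).
Qed.

Lemma valency s a a' : s \in S -> #|nbhd a s| = #|nbhd a' s|.
Proof.
move=> sS; case: hS => [[_ _ htr hc] dS].
have := hc s (transp s) (diag [set: T]) sS (htr _ sS) dS a a a' a'.
rewrite !inE !eqxx => /(_ isT isT) e.
transitivity #|[set b0 | ((a, b0) \in s) && ((b0, a) \in transp s)]|.
  by apply: eq_card => z; rewrite !inE andbb.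
by rewrite e; apply: eq_card => z; rewrite !inE andbb.
Qed.


Lemma inSt g b : (g \in 'C_AutG[b | 'P]%g) = (g \in Aut S) && (g b == b).
Proof. by rewrite !inE sub1set inE. Qed.

Lemma inSt' (A : {set {perm T}}) g b : (g \in 'C_A[b | 'P]%g) = (g \in A) && (g b == b).
Proof. by rewrite !inE sub1set inE. Qed.

Lemma stab_card b s x0 : s \in S -> (b, x0) \in s -> x0 != b ->
  #|'C_AutG[b | 'P]%g| = #|nbhd b s|.
Proof.
move=> sS bx xb.
rewrite -(@card_in_imset _ _ (fun g : {perm T} => g x0)).
  apply: eq_card => z; apply/imsetP/idP.
    case=> g; rewrite inSt => /andP[gA /eqP gb] ->.
    by rewrite inE; have := Aut_mem gA sS bx; rewrite /= gb.
  rewrite inE => bz; have [g gA [gb gx]] := P1all sS bx bz.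
  by exists g; rewrite // inSt gA gb eqxx.
move=> g g'; rewrite !inSt => /andP[gA /eqP gb] /andP[gA' /eqP gb'] /= e.
have hA : (g * g'^-1)%g \in Aut S.
  by rewrite -[Aut S]/(gval AutG) groupM ?groupV.
have h1 : (g * g'^-1)%g b = b by rewrite permM gb -{1}gb' permK.
have h2 : (g * g'^-1)%g x0 = x0 by rewrite permM e permK.
apply/eqP; rewrite eq_mulgV1; apply/eqP; exact: P2all hA h1 xb h2.
Qed.


Section Frob.
Variables (a : T) (s : {set T * T}).
Hypothesis sS : s \in S.
Hypothesis h2 : 1 < #|nbhd a s|.

Lemma stabk b : #|'C_AutG[b | 'P]%g| = #|nbhd a s|.
Proof.
have hb : 1 < #|nbhd b s| by rewrite (valency b a sS).
have [x [y [xi yi xy]]] := card_gt1P hb.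
rewrite (valency a b sS).
case: (boolP (x == b)) => [/eqP xb|xb].
  have yb : y != b by rewrite -xb eq_sym.
  by apply: (stab_card sS _ yb); move: yi; rewrite inE.
by apply: (stab_card sS _ xb); move: xi; rewrite inE.
Qed.

Lemma arith N1 N2 k G : N1 * k = G -> N2 * k = G -> 1 < k -> 0 < G ->
  (N1 + N2) * (k - 1) <= G - 1 -> False.
Proof.
move=> e1 e2 k1 G0 le.
have k0 : 0 < k by apply: ltnW.
have eN : N2 = N1 by apply/eqP; rewrite -(eqn_pmul2r k0) e1 e2.
subst N2.
have k1' : 1 <= k - 1 by rewrite subn_gt0.
have : N1 * k <= (N1 + N1) * (k - 1).
  have -> : N1 * k = N1 * (k - 1) + N1 by rewrite -{1}(subnK (ltnW k1)) mulnDr muln1.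
  by rewrite mulnDl leq_add2l -{1}(muln1 N1) leq_mul2l k1' orbT.
move=> h; have := leq_trans h le; rewrite e1.
by case: G G0 {e1 e2 le h} => // G _; rewrite subn1 /= ltnn.
Qed.

Lemma transit b : b \in orbit 'P AutG a.
Proof.
apply/negPn/negP => nb.
set O1 := orbit 'P AutG a; set O2 := orbit 'P AutG b.
have c1 : #|O1| * #|nbhd a s| = #|AutG| by rewrite -(stabk a) card_orbit_stab.
have c2 : #|O2| * #|nbhd a s| = #|AutG| by rewrite -(stabk b) card_orbit_stab.
have dis : O1 :&: O2 = set0.
  apply/setP => z; rewrite !inE; apply/negbTE/negP => /andP[z1 z2].
  move/negP: nb; apply; rewrite /O1 -(orbit_eqP z1) (orbit_eqP z2); exact: orbit_refl.
have cU : #|O1 :|: O2| = #|O1| + #|O2| by rewrite cardsU dis cards0 subn0.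
set Q := [set bg : T * {perm T} | (bg.1 \in O1 :|: O2) &&
                   (bg.2 \in 'C_AutG[bg.1 | 'P]%g :\ 1%g)].
have cQ : #|Q| = #|O1 :|: O2| * (#|nbhd a s| - 1).
  rewrite card_sum -(pair_bigA _ (fun b0 g => ((b0 \in O1 :|: O2) &&
     (g \in 'C_AutG[b0 | 'P]%g :\ 1%g) : nat))) /=.
  rewrite -sum_nat_const [RHS]big_mkcond /=; apply: eq_bigr => b0 _.
  case: (b0 \in O1 :|: O2) => /=; last by rewrite big1.
  transitivity #|'C_AutG[b0 | 'P]%g :\ 1%g|.
    by rewrite -card_sum; apply: eq_card => g; rewrite in_set.
  have := cardsD1 1%g ('C_AutG[b0 | 'P]%g); rewrite group1 (stabk b0) add1n => ->.
  by rewrite subn1.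
have lQ : #|Q| <= #|AutG| - 1.
  rewrite (cardsD1 1%g AutG) group1 add1n subn1 /=.
  rewrite -(@card_in_imset _ _ (fun bg : T * {perm T} => bg.2)).
    apply: subset_leq_card; apply/subsetP => g /imsetP [[b0 g0]].
    rewrite in_set /= !(in_setD, in_set1) inSt' => /and3P[_ g1 /andP[gA _]] ->.
    by rewrite g1.
  move=> [b1 g1] [b0 g0]; rewrite !in_set /= !(in_setD, in_set1).
  move=> /and4P[_ n1 gA1 /subsetP f1] /and4P[_ n0 gA0 /subsetP f0] /= e.
  subst g0.
  have {}gA1 : g1 \in Aut S by rewrite inE.
  have {}f1 : g1 b1 = b1 by have := f1 b1 (set11 b1); rewrite inE => /eqP.
  have {}f0 : g1 b0 = b0 by have := f0 b0 (set11 b0); rewrite inE => /eqP.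
  case: (boolP (b0 == b1)) => [/eqP -> //|nb0].
  by move: n1; rewrite (P2all gA1 f1 nb0 f0) eqxx.
have G0 : 0 < #|AutG| by rewrite card_gt0; apply/set0Pn; exists 1%g; exact: group1.
apply: (arith c1 c2 h2 G0); by rewrite -cU -cQ.
Qed.

Lemma orb_eq p : [set ((g : {perm T}) p.1, g p.2) | g in AutG] = pblock S p.
Proof.
have [/eqP cS tS _] := and3P (S_part hS).
apply/setP => q; apply/imsetP/idP.
  by case=> g gA ->; rewrite -(Aut_pres p gA); exact: pblock_self (S_part hS).
move=> qp.
have : p.1 \in orbit 'P AutG q.1 by rewrite (orbit_eqP (transit q.1)) transit.
case/orbitP => g1 g1A /= e1.
have uS : pblock S p \in S by rewrite pblock_mem ?cS ?inE.
have h1 : (p.1, g1 q.2) \in pblock S p.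
  rewrite -(same_pblock tS qp) -e1 -(Aut_pres q g1A).
  exact: pblock_self (S_part hS).
have h2' : (p.1, p.2) \in pblock S p by rewrite -surjective_pairing; exact: pblock_self (S_part hS).
have [h hA [hb hx]] := P1all uS h1 h2'.
have gA : (g1 * h)%g \in AutG by rewrite groupM.
exists (g1 * h)^-1%g; first by rewrite -[Aut S]/(gval AutG) groupV.
have e1' : g1 q.1 = p.1 := e1.
have e : (g1 * h)%g q.1 = p.1 by rewrite permM e1' hb.
have e2 : (g1 * h)%g q.2 = p.2 by rewrite permM hx.
by rewrite -e -e2 !permK -surjective_pairing.
Qed.

Lemma orbitals_eq : orbitals AutG = S.
Proof.
have [/eqP cS tS S0] := and3P (S_part hS).
apply/setP => B; apply/imsetP/idP.
  by case=> p _ ->; rewrite orb_eq pblock_mem ?cS ?inE.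
move=> BS; have : B != set0 by apply: contraNneq S0 => <-.
case/set0Pn => p pB; exists p => //.
by rewrite orb_eq (def_pblock tS BS pB).
Qed.

Lemma frob : frobenius_scheme S.
Proof.
exists AutG; split; last by rewrite orbitals_eq.
split.
- apply/imsetP; exists a; rewrite ?inE //.
  by apply/setP => z; rewrite inE transit.
- have [x [y [xi yi xy]]] := card_gt1P h2.
  rewrite !inE in xi yi.
  have [g gA [ga gx]] := P1all sS xi yi.
  exists g => //; split; last by exists a.
  apply/eqP => g1; move: gx; rewrite g1 perm1 => e.
  by rewrite e eqxx in xy.
- move=> g x y gA xy gx gy; apply: (P2all gA gx _ gy).
  by rewrite eq_sym.
Qed.

End Frob.

End Final.

Theorem theorem6p1 (T : finType) (S : {set {set T * T}}) :
  scheme S ->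
  (forall (a : T) (R : {set {set T * T}}), alpha_extension S a R ->
     semiregular_off R a /\ fibers R = [set nbhd a s | s in S]) ->
  regular_scheme S \/ frobenius_scheme S.
Proof.
move=> hS hyp.
case: (boolP [exists a, [exists s : {set T * T}, (s \in S) && (1 < #|nbhd a s|)]]).
  by case/existsP => a /existsP [s /andP[sS h2]]; right; exact: (frob hS hyp sS h2).
move=> nex; left; split => // a s sS; rewrite leqNgt; apply/negP => h.
by apply: (negP nex); apply/existsP; exists a; apply/existsP; exists s; rewrite sS h.
Qed.
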